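(* Let $X=(G,H,\mu,\gamma)$ be a crossed module of finite groups and $\mathbb{K}$ a field. Then $D(G,H)$ is a braided (quasitriangular) bialgebra with $R$-matrix $$R=\sum_{h\in H}(\delta_h\otimes 1)\otimes(1\otimes\gamma(h))\in D(G,H)\otimes D(G,H),$$ where in the first factor $1$ is the neutral element of $G$ and in the second factor $1=\sum_{x\in H}\delta_x$ is the unit of $\mathbb{K}[H]$.
   Context: A crossed module of finite groups is a quadruple $X=(G,H,\mu,\gamma)$ where $G,H$ are finite groups, $\mu$ is a left action of $G$ on $H$ by group automorphisms, written $g\cdot h$, and $\gamma:H\to G$ is a group homomorphism with $\gamma(g\cdot h)=g\gamma(h)g^{-1}$ and $\gamma(h)\cdot n=hnh^{-1}$ for all $g\in G$, $h,n\in H$. $D(G,H)$ is the Hopf algebra $\mathbb{K}[H]\otimes\mathbb{K}G$, where $\mathbb{K}[H]$ is the dual of $\mathbb{K}H$ with basis $\{\delta_x\}_{x\in H}$ dual to the group elements, with product $(\delta_x\otimes a)(\delta_y\otimes b)=\delta_{x,a\cdot y}\delta_x\otimes ab$, unit $(\sum_{x\in H}\delta_x)\otimes 1$, coproduct $\Delta(\delta_x\otimes a)=\sum_{h\in H}(\delta_h\otimes a)\otimes(\delta_{h^{-1}x}\otimes a)$, counit $\varepsilon(\delta_x\otimes a)=\delta_{x,1}$ and antipode $S(\delta_x\otimes a)=\delta_{a^{-1}\cdot x^{-1}}\otimes a^{-1}$. A braided bialgebra is a bialgebra $A$ with an invertible $R\in A\otimes A$ such that $\Delta^{op}(x)=R\Delta(x)R^{-1}$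 for all $x$, $(\Delta\otimes\mathrm{id})(R)=R_{13}R_{23}$ and $(\mathrm{id}\otimes\Delta)(R)=R_{13}R_{12}$. *)

(* Defs.v *)
From HB Require Import structures.
From mathcomp Require Import all_boot all_order all_algebra all_fingroup.
Set Implicit Arguments. Unset Strict Implicit. Unset Printing Implicit Defensive.
Import GRing.Theory.
Local Open Scope ring_scope.

(* Crossed module (G, H, mu, gamma): G = [set: gT], H = [set: hT] are the
   whole finite groups; mu g h is written act g h. *)
Definition is_crossed_module (gT hT : finGroupType)
  (act : gT -> hT -> hT) (gamma : hT -> gT) : Prop :=
  [/\ (forall h, act 1 h = h),
      (forall g1 g2 h, act (g1 * g2) h = act g1 (act g2 h)),
      (forall g h n, act g (h * n) = act g h * act g n),
      (forall h n, gamma (h * n) = gamma h * gamma n) &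
      (forall g h, gamma (act g h) = g * gamma h * g^-1)
      /\ (forall h n, act (gamma h) n = h * n * h^-1)]%g.

Section DGH.
Variables (K : fieldType) (gT hT : finGroupType).
Variables (act : gT -> hT -> hT) (gamma : hT -> gT).

(* Basis of D(G,H): pairs (x, a) standing for delta_x (x) a. *)
Definition Bas := (hT * gT)%type.
(* An element of D(G,H) is its coefficient function in that basis;
   D(G,H)^{(x)2} and D(G,H)^{(x)3} use the product bases. *)
Definition D := {ffun Bas -> K}.
Definition D2 := {ffun Bas * Bas -> K}.
Definition D3 := {ffun Bas * Bas * Bas -> K}.

(* structure constants: (delta_x (x) a)(delta_y (x) b)
   = [x = a.y] delta_x (x) ab ; coefficient at p *)
Definition cst (u v p : Bas) : K :=
  ((u.1 == act u.2 v.1) && (p.1 == u.1) && (p.2 == u.2 * v.2)%g)%:R.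

Definition mulD (f g : D) : D :=
  [ffun p => \sum_(u : Bas) \sum_(v : Bas) (f u * g v * cst u v p)%R].
Definition oneD : D := [ffun p : Bas => (p.2 == 1%g)%:R].

Definition mulD2 (f g : D2) : D2 :=
  [ffun p : Bas * Bas => \sum_(u : Bas * Bas) \sum_(v : Bas * Bas)
     (f u * g v * cst u.1 v.1 p.1 * cst u.2 v.2 p.2)%R].
Definition oneD2 : D2 := [ffun p : Bas * Bas => oneD p.1 * oneD p.2].

Definition mulD3 (f g : D3) : D3 :=
  [ffun p : Bas * Bas * Bas => \sum_(u : Bas * Bas * Bas) \sum_(v : Bas * Bas * Bas)
     (f u * g v * cst u.1.1 v.1.1 p.1.1 * cst u.1.2 v.1.2 p.1.2 * cst u.2 v.2 p.2)%R].

(* Delta(delta_x (x) a) = sum_h (delta_h (x) a) (x) (delta_{h^-1 x} (x) a) *)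
Definition Delta (f : D) : D2 :=
  [ffun q : Bas * Bas => (q.1.2 == q.2.2)%:R * f ((q.1.1 * q.2.1)%g, q.1.2)].
Definition Delta_op (f : D) : D2 := [ffun q : Bas * Bas => Delta f (q.2, q.1)].
Definition epsD (f : D) : K := \sum_(a : gT) f (1%g, a).

Definition Delta_l (t : D2) : D3 :=
  [ffun q : Bas * Bas * Bas =>
     (q.1.1.2 == q.1.2.2)%:R * t (((q.1.1.1 * q.1.2.1)%g, q.1.1.2), q.2)].
Definition Delta_r (t : D2) : D3 :=
  [ffun q : Bas * Bas * Bas =>
     (q.1.2.2 == q.2.2)%:R * t (q.1.1, ((q.1.2.1 * q.2.1)%g, q.1.2.2))].
Definition eps_l (t : D2) : D := [ffun b : Bas => \sum_(a : gT) t ((1%g, a), b)].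
Definition eps_r (t : D2) : D := [ffun b : Bas => \sum_(a : gT) t (b, (1%g, a))].

Definition leg12 (t : D2) : D3 := [ffun q : Bas * Bas * Bas => t (q.1.1, q.1.2) * oneD q.2].
Definition leg13 (t : D2) : D3 := [ffun q : Bas * Bas * Bas => t (q.1.1, q.2) * oneD q.1.2].
Definition leg23 (t : D2) : D3 := [ffun q : Bas * Bas * Bas => oneD q.1.1 * t (q.1.2, q.2)].

(* R = sum_h (delta_h (x) 1) (x) (1 (x) gamma h) *)
Definition Rmat : D2 :=
  [ffun q : Bas * Bas => (q.1.2 == 1%g)%:R * (q.2.2 == gamma q.1.1)%:R].

Definition is_bialgebra : Prop :=
  [/\ (forall f g h, mulD f (mulD g h) = mulD (mulD f g) h),
      (forall f, mulD oneD f = f /\ mulD f oneD = f),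
      (forall f, Delta_l (Delta f) = Delta_r (Delta f)),
      (forall f, eps_l (Delta f) = f /\ eps_r (Delta f) = f) &
      (forall f g, Delta (mulD f g) = mulD2 (Delta f) (Delta g)) /\ Delta oneD = oneD2
      /\ (forall f g, epsD (mulD f g) = epsD f * epsD g) /\ epsD oneD = 1].

Definition is_braided (R : D2) : Prop :=
  [/\ (exists Rinv : D2, mulD2 R Rinv = oneD2 /\ mulD2 Rinv R = oneD2 /\
         forall f, Delta_op f = mulD2 (mulD2 R (Delta f)) Rinv),
      Delta_l R = mulD3 (leg13 R) (leg23 R) &
      Delta_r R = mulD3 (leg13 R) (leg12 R)].

End DGH.

(* Main.v *)
Require Import Defs.
From mathcomp Require Import all_boot all_order all_algebra all_fingroup.
Set Implicit Arguments. Unset Strict Implicit. Unset Printing Implicit Defensive.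
Import GRing.Theory.
Local Open Scope ring_scope.

Section Proofs.
Variables (K : fieldType) (gT hT : finGroupType).
Variables (act : gT -> hT -> hT) (gamma : hT -> gT).
Hypothesis act1 : forall h, act 1%g h = h.
Hypothesis actM : forall g1 g2 h, act (g1 * g2)%g h = act g1 (act g2 h).
Hypothesis actmorph : forall g h n, act g (h * n)%g = (act g h * act g n)%g.
Hypothesis gammaM : forall h n, gamma (h * n)%g = (gamma h * gamma n)%g.
Hypothesis gammaact : forall g h, gamma (act g h) = (g * gamma h * g^-1)%g.
Hypothesis actgamma : forall h n, act (gamma h) n = (h * n * h^-1)%g.

Lemma actK g : cancel (act g) (act g^-1).
Proof. by move=> h; rewrite -actM mulVg act1. Qed.
Lemma actVK g : cancel (act g^-1) (act g).
Proof. by move=> h; rewrite -actM mulgV act1. Qed.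
Lemma act_1 g : act g 1%g = 1%g.
Proof.
have := actmorph g 1 1; rewrite mulg1 => /(congr1 (fun x => (act g 1)^-1 * x)%g).
by rewrite mulVg mulKg.
Qed.
Lemma gamma1 : gamma 1%g = 1%g.
Proof.
have := gammaM 1 1; rewrite mulg1 => /(congr1 (fun x => (gamma 1)^-1 * x)%g).
by rewrite mulVg mulKg.
Qed.
Lemma gammaV h : gamma h^-1 = ((gamma h)^-1)%g.
Proof.
apply: (mulgI (gamma h)); by rewrite -gammaM !mulgV gamma1.
Qed.

Lemma sum_single (T : finType) (t0 : T) (G : T -> K) :
  (forall t, t != t0 -> G t = 0) -> \sum_t G t = G t0.
Proof.
move=> H; rewrite (bigD1 t0) //= big1 ?addr0 // => t /H //.
Qed.

Lemma sum_pair (A B : finType) (F : A * B -> K) :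
  \sum_v F v = \sum_a \sum_b F (a, b).
Proof. by rewrite pair_bigA; apply: eq_bigr => -[]. Qed.

Lemma cstE (u v p : Bas gT hT) :
  cst K act u v p = ((p.1 == u.1) && (v == (act u.2^-1 u.1, u.2^-1 * p.2)%g))%:R.
Proof.
rewrite /cst; congr (_%:R).
case: u v p => [x a] [y b] [z c] /=.
congr (nat_of_bool _); apply/idP/idP.
- case/andP=> /andP[/eqP -> /eqP ->] /eqP ->.
  by rewrite eqxx actK mulKg eqxx.
- case/andP=> /eqP -> /eqP [-> ->].
  by rewrite actVK mulKVg !eqxx.
Qed.

Lemma mulDE (f g : D K gT hT) p :
  mulD act f g p = \sum_a f (p.1, a) * g (act a^-1 p.1, a^-1 * p.2)%g.
Proof.
rewrite ffunE sum_pair (@sum_single _ p.1).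
  apply: eq_bigr => a _.
  rewrite (@sum_single _ (act a^-1 p.1, a^-1 * p.2)%g).
    by rewrite cstE /= !eqxx mulr1.
  by move=> v /negbTE Hv; rewrite cstE /= Hv andbF mulr0.
move=> x Hx; rewrite big1 // => a _; rewrite big1 // => v _.
by rewrite cstE /= eq_sym (negbTE Hx) mulr0.
Qed.


Lemma sum_Bas (x : hT) (G : Bas gT hT -> K) :
  (forall u, u.1 != x -> G u = 0) -> \sum_u G u = \sum_a G (x, a).
Proof.
move=> H; rewrite sum_pair (@sum_single _ x) // => y Hy.
by rewrite big1 // => a _; apply: H.
Qed.

Lemma cst0 (u v p : Bas gT hT) : u.1 != p.1 -> cst K act u v p = 0.
Proof. by move=> H; rewrite cstE eq_sym (negbTE H). Qed.

Lemma cst_nxt (a : gT) (p : Bas gT hT) :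
  cst K act (p.1, a) (act a^-1 p.1, a^-1 * p.2)%g p = 1.
Proof. by rewrite cstE /= !eqxx. Qed.

Lemma cst_ne (u v p : Bas gT hT) : v != (act u.2^-1 u.1, u.2^-1 * p.2)%g ->
  cst K act u v p = 0.
Proof. by move=> H; rewrite cstE (negbTE H) andbF. Qed.

Lemma cst_ne' (u v p : Bas gT hT) :
  (v.1 != (act u.2^-1 u.1, u.2^-1 * p.2)%g.1) || (v.2 != (act u.2^-1 u.1, u.2^-1 * p.2)%g.2) ->
  cst K act u v p = 0.
Proof. by move=> H; apply: cst_ne; case: v H => ? ? /=; rewrite xpair_eqE negb_and. Qed.

Lemma mulD2E (f g : D2 K gT hT) p :
  mulD2 act f g p = \sum_a \sum_b f ((p.1.1, a), (p.2.1, b)) *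
     g ((act a^-1 p.1.1, a^-1 * p.1.2), (act b^-1 p.2.1, b^-1 * p.2.2))%g.
Proof.
rewrite ffunE sum_pair (@sum_Bas p.1.1); last first.
  move=> u Hu; rewrite big1 // => u2 _; rewrite big1 // => v _.
  by rewrite cst0 // mulr0 mul0r.
apply: eq_bigr => a _.
rewrite (@sum_Bas p.2.1); last first.
  move=> u Hu; rewrite big1 // => v _.
  by rewrite (@cst0 _ _ p.2) // mulr0.
apply: eq_bigr => b _.
rewrite (@sum_single _ ((act a^-1 p.1.1, a^-1 * p.1.2), (act b^-1 p.2.1, b^-1 * p.2.2))%g).
  by rewrite /= !cst_nxt !mulr1.
move=> [v1 v2]; rewrite xpair_eqE negb_and => /orP[] H.
  by rewrite (@cst_ne _ v1) ?mulr0 ?mul0r.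
by rewrite (@cst_ne _ v2) ?mulr0 ?mul0r.
Qed.


Lemma mulD3E (f g : D3 K gT hT) p :
  mulD3 act f g p = \sum_a \sum_b \sum_c f ((p.1.1.1, a), (p.1.2.1, b), (p.2.1, c)) *
     g ((act a^-1 p.1.1.1, a^-1 * p.1.1.2), (act b^-1 p.1.2.1, b^-1 * p.1.2.2),
        (act c^-1 p.2.1, c^-1 * p.2.2))%g.
Proof.
rewrite ffunE sum_pair sum_pair.
rewrite (@sum_Bas p.1.1.1); last first.
  move=> u Hu; rewrite big1 // => u2 _; rewrite big1 // => u3 _; rewrite big1 // => v _.
  by rewrite cst0 // mulr0 !mul0r.
apply: eq_bigr => a _.
rewrite (@sum_Bas p.1.2.1); last first.
  move=> u Hu; rewrite big1 // => u3 _; rewrite big1 // => v _.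
  by rewrite (@cst0 _ _ p.1.2) // mulr0 mul0r.
apply: eq_bigr => b _.
rewrite (@sum_Bas p.2.1); last first.
  move=> u Hu; rewrite big1 // => v _.
  by rewrite (@cst0 _ _ p.2) // mulr0.
apply: eq_bigr => c _.
rewrite (@sum_single _ ((act a^-1 p.1.1.1, a^-1 * p.1.1.2), (act b^-1 p.1.2.1, b^-1 * p.1.2.2),
        (act c^-1 p.2.1, c^-1 * p.2.2))%g).
  by rewrite /= !cst_nxt !mulr1.
move=> [[v1 v2] v3]; rewrite !xpair_eqE !negb_and => /orP[/orP[]|] H.
- by rewrite /= (@cst_ne' _ v1) ?mulr0 ?mul0r.
- by rewrite /= (@cst_ne' _ v2) ?mulr0 ?mul0r.
- by rewrite /= (@cst_ne' _ v3) ?mulr0 ?mul0r.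
Qed.


Lemma nat0 (b : bool) : b = false -> (b%:R : K) = 0.
Proof. by move=> ->. Qed.
Lemma nat1 (b : bool) : b -> (b%:R : K) = 1.
Proof. by move=> ->. Qed.

Lemma tr : (true%:R : K) = 1. Proof. by []. Qed.
Lemma fl : (false%:R : K) = 0. Proof. by []. Qed.

Lemma bM (a b : bool) : (a%:R * b%:R : K) = (a && b)%:R.
Proof. by case: a; case: b; rewrite ?mul1r ?mul0r. Qed.

Lemma assocD (f g h : D K gT hT) : mulD act f (mulD act g h) = mulD act (mulD act f g) h.
Proof.
apply/ffunP => p; rewrite !mulDE.
under [RHS]eq_bigr => c _ do rewrite mulDE big_distrl.
rewrite exchange_big /=; apply: eq_bigr => a _.
rewrite mulDE big_distrr /= [RHS](reindex_inj (mulgI a)) /=.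
apply: eq_bigr => b _.
by rewrite mulKg invMg actM !mulgA mulrA.
Qed.

Lemma unitD (f : D K gT hT) : mulD act (oneD K gT hT) f = f /\ mulD act f (oneD K gT hT) = f.
Proof.
split; apply/ffunP => p; rewrite mulDE.
  rewrite (@sum_single _ 1%g).
    by rewrite ffunE /= eqxx mul1r invg1 act1 mul1g; case: p.
  by move=> a /negbTE Ha; rewrite ffunE /= Ha mul0r.
rewrite (@sum_single _ p.2).
  by rewrite ffunE /= mulVg eqxx mulr1; case: p.
by move=> a Ha; rewrite ffunE /= (@nat0 _) ?mulr0 // -eq_mulVg1 (negbTE Ha).
Qed.

Lemma coassocD (f : D K gT hT) : Delta_l (Delta f) = Delta_r (Delta f).
Proof.
apply/ffunP => q; rewrite !ffunE /= mulgA.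
case: (eqVneq q.1.1.2 q.1.2.2) => [E|ne].
  by rewrite E tr !mul1r.
by rewrite fl !mul0r mulr0.
Qed.

Lemma counitD (f : D K gT hT) : eps_l (Delta f) = f /\ eps_r (Delta f) = f.
Proof.
split; apply/ffunP => b; rewrite ffunE.
  rewrite (@sum_single _ b.2).
    by rewrite ffunE /= eqxx mul1r mul1g; case: b.
  by move=> a /negbTE Ha; rewrite ffunE /= Ha mul0r.
rewrite (@sum_single _ b.2).
  by rewrite ffunE /= eqxx mul1r mulg1; case: b.
by move=> a Ha; rewrite ffunE /= eq_sym (negbTE Ha) mul0r.
Qed.

Lemma DeltaM (f g : D K gT hT) : Delta (mulD act f g) = mulD2 act (Delta f) (Delta g).
Proof.
apply/ffunP => q; rewrite mulD2E ffunE mulDE big_distrr /=.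
apply: eq_bigr => a _.
rewrite (@sum_single _ a).
  rewrite !ffunE /= eqxx mul1r (inj_eq (mulgI _)) -actmorph.
  case: (q.1.2 =P q.2.2) => _; first by rewrite !mul1r.
  by rewrite !mul0r mulr0.
by move=> b Hb; rewrite !ffunE /= eq_sym (negbTE Hb) mul0r mul0r.
Qed.

Lemma Delta1 : Delta (oneD K gT hT) = oneD2 K gT hT.
Proof.
apply/ffunP => q; rewrite !ffunE /=.
rewrite !bM; congr (nat_of_bool _)%:R.
by case: (q.1.2 =P 1%g) => [->|_]; rewrite ?andbF // andbT eq_sym.
Qed.

Lemma epsM (f g : D K gT hT) : epsD (mulD act f g) = epsD f * epsD g.
Proof.
rewrite /epsD big_distrl.
rewrite (eq_bigr _ (fun c _ => mulDE f g (1%g, c))).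
rewrite exchange_big /=; apply: eq_bigr => a _.
rewrite big_distrr /= (reindex_inj (mulgI a)) /=.
by apply: eq_bigr => c _; rewrite mulKg act_1.
Qed.

Lemma eps1 : epsD (oneD K gT hT) = 1.
Proof.
rewrite /epsD (@sum_single _ 1%g); first by rewrite ffunE /= eqxx.
by move=> a /negbTE Ha; rewrite ffunE /= Ha.
Qed.


Definition Rinv : D2 K gT hT :=
  [ffun q : Bas gT hT * Bas gT hT =>
     (q.1.2 == 1%g)%:R * (q.2.2 == (gamma q.1.1)^-1)%g%:R].

Lemma RRinv : mulD2 act (Rmat K gamma) Rinv = oneD2 K gT hT.
Proof.
apply/ffunP => p; rewrite mulD2E.
rewrite (@sum_single _ 1%g); last first.
  by move=> a /negbTE Ha; rewrite big1 // => b _; rewrite !ffunE /= Ha !mul0r.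
rewrite (@sum_single _ (gamma p.1.1)); last first.
  by move=> b Hb; rewrite !ffunE /= (negbTE Hb) !mulr0 !mul0r.
rewrite !ffunE /= !eqxx invg1 act1 !mul1g !mul1r -{2}(mulg1 (gamma p.1.1)^-1)%g.
by rewrite (inj_eq (mulgI _)).
Qed.

Lemma RinvR : mulD2 act Rinv (Rmat K gamma) = oneD2 K gT hT.
Proof.
apply/ffunP => p; rewrite mulD2E.
rewrite (@sum_single _ 1%g); last first.
  by move=> a /negbTE Ha; rewrite big1 // => b _; rewrite !ffunE /= Ha !mul0r.
rewrite (@sum_single _ (gamma p.1.1)^-1%g); last first.
  by move=> b Hb; rewrite !ffunE /= (negbTE Hb) !mulr0 !mul0r.
rewrite !ffunE /= !eqxx invg1 act1 !mul1g !mul1r invgK -{2}(mulg1 (gamma p.1.1)).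
by rewrite (inj_eq (mulgI _)).
Qed.


Lemma grp (a y b : gT) : (a == y^-1 * (b * (a^-1 * y * a^-1^-1)))%g = (b == a).
Proof.
rewrite invgK !mulgA -{1}(mul1g a) (inj_eq (mulIg a)).
apply/eqP/eqP => [H|->]; last by rewrite mulgK mulVg.
move: H => /(congr1 (fun z => y * z * y^-1 * a)%g).
by rewrite mulg1 mulgV mul1g !mulgA mulgV mul1g mulgK mulgKV => ->.
Qed.

Lemma eqV1 (a x : gT) : (a^-1 * x == 1)%g = (a == x).
Proof. by rewrite [RHS]eq_mulVg1. Qed.

Lemma quasiD (f : D K gT hT) :
  Delta_op f = mulD2 act (mulD2 act (Rmat K gamma) (Delta f)) Rinv.
Proof.
apply/ffunP => p; rewrite mulD2E.
rewrite (@sum_single _ p.1.2); last first.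
  move=> a Ha; rewrite big1 // => b _; rewrite [Rinv _]ffunE /=.
  by rewrite eqV1 (negbTE Ha) mul0r mulr0.
rewrite (@sum_single _ (p.2.2 * gamma (act p.1.2^-1 p.1.1))%g); last first.
  move=> b Hb; rewrite [Rinv _]ffunE /= (@nat0 (_ == _^-1)%g) ?mulr0 //.
  apply/negbTE; apply: contra Hb => /eqP H.
  by rewrite -[gamma _]invgK -H invMg invgK mulKVg.
rewrite [Rinv _]ffunE /= mulVg eqxx invMg mulgKV eqxx tr !mulr1.
rewrite mulD2E.
rewrite (@sum_single _ 1%g); last first.
  by move=> a /negbTE Ha; rewrite big1 // => b _; rewrite !ffunE /= Ha !mul0r.
rewrite (@sum_single _ (gamma p.1.1)); last first.
  by move=> b Hb; rewrite !ffunE /= (negbTE Hb) !mulr0 !mul0r.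
rewrite !ffunE /= !eqxx !mul1r invg1 act1 mul1g -gammaV actgamma invgK.
rewrite !mulgA mulgV mul1g gammaV gammaact -[(_ * p.2.2 * _)%g]mulgA grp.
by case: (eqVneq p.2.2 p.1.2) => [->|_]; rewrite ?fl ?mul0r.
Qed.


Lemma eqVl (a x y : gT) : (a^-1 * x == y)%g = (x == a * y)%g.
Proof. by rewrite -(inj_eq (mulgI a)) mulKVg. Qed.

Lemma DeltalR : Delta_l (Rmat K gamma) = mulD3 act (leg13 (Rmat K gamma)) (leg23 (Rmat K gamma)).
Proof.
apply/ffunP => q; rewrite mulD3E.
rewrite (@sum_single _ 1%g); last first.
  move=> a /negbTE Ha; rewrite big1 // => b _; rewrite big1 // => c _.
  by rewrite !ffunE /= Ha !mul0r.
rewrite (@sum_single _ 1%g); last first.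
  move=> b /negbTE Hb; rewrite big1 // => c _.
  by rewrite !ffunE /= Hb !mulr0 !mul0r.
rewrite (@sum_single _ (gamma q.1.1.1)); last first.
  move=> c /negbTE Hc.
  by rewrite !ffunE /= Hc !mulr0 !mul0r.
rewrite !ffunE /= !eqxx !mul1r !invg1 !act1 !mul1g !bM gammaM.
rewrite eqVl; congr (nat_of_bool _)%:R.
case: (q.1.1.2 =P 1%g) => [->|_] /=; last by rewrite andbF.
by rewrite eq_sym.
Qed.

Lemma DeltarR : Delta_r (Rmat K gamma) = mulD3 act (leg13 (Rmat K gamma)) (leg12 (Rmat K gamma)).
Proof.
apply/ffunP => q; rewrite mulD3E.
rewrite (@sum_single _ 1%g); last first.
  move=> a /negbTE Ha; rewrite big1 // => b _; rewrite big1 // => c _.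
  by rewrite !ffunE /= Ha !mul0r.
rewrite (@sum_single _ 1%g); last first.
  move=> b /negbTE Hb; rewrite big1 // => c _.
  by rewrite !ffunE /= Hb !mulr0 !mul0r.
rewrite (@sum_single _ (gamma q.1.1.1)); last first.
  move=> c /negbTE Hc.
  by rewrite !ffunE /= Hc !mulr0 !mul0r.
rewrite !ffunE /= !eqxx !mul1r !invg1 !act1 !mul1g !bM eqV1.
congr (nat_of_bool _)%:R.
case: (q.1.2.2 =P gamma q.1.1.1) => [->|_]; rewrite ?andbF ?andbT //.
by rewrite andbC eq_sym.
Qed.

End Proofs.

Theorem mainTheorem3 (K : fieldType) (gT hT : finGroupType)
  (act : gT -> hT -> hT) (gamma : hT -> gT) :
  is_crossed_module act gamma ->
  @is_bialgebra K gT hT act /\ @is_braided K gT hT act (@Rmat K gT hT gamma).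
Proof.
case=> a1 aM amor gM [gact agam].
split.
  split.
  - by move=> f g h; apply: assocD.
  - by move=> f; apply: unitD.
  - by move=> f; apply: coassocD.
  - by move=> f; apply: counitD.
  - split; first by move=> f g; apply: DeltaM.
    split; first by apply: Delta1.
    split; first by move=> f g; apply: epsM.
    exact: eps1.
split.
- exists (Rinv K gamma); split; first exact: RRinv.
  split; first exact: RinvR.
  by move=> f; apply: quasiD.
- exact: DeltalR.
- exact: DeltarR.
Qed.
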